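(* Let $n\ge2$, $\kappa\ge1$ with $n>\kappa+1$, and let $G\in\mathcal G_{[n;\kappa]}$ be skew-symmetric. Then $c_i(x)=0$ for every profile $x\in\{1,\dots,\kappa\}^n$ and every $i=1,\dots,n$.
   Context: A finite game $G\in\mathcal G_{[n;\kappa]}$ has players $\{1,\dots,n\}$, each with strategy set $\{1,\dots,\kappa\}$, and payoff functions $c_i:\{1,\dots,\kappa\}^n\to\mathbb R$. $G$ is skew-symmetric if for every permutation $\sigma\in\mathbf S_n$, every $i$ and every profile, $c_i(x_1,\dots,x_n)=\mathrm{sgn}(\sigma)\,c_{\sigma(i)}(x_{\sigma^{-1}(1)},\dots,x_{\sigma^{-1}(n)})$. *)

(* Defs.v *)
From mathcomp Require Import all_boot all_order all_algebra all_fingroup.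
From mathcomp Require Import all_reals.
Set Implicit Arguments. Unset Strict Implicit. Unset Printing Implicit Defensive.
Import GRing.Theory Num.Theory.
Local Open Scope ring_scope.

(* A finite game in G_[n;kappa]: players 'I_n (= {1..n} shifted to 0-based),
   strategies 'I_kappa, profiles {ffun 'I_n -> 'I_kappa}, and payoff
   functions c i : profile -> R (R a real number type). *)
Definition profile (n kappa : nat) := {ffun 'I_n -> 'I_kappa}.
Definition game (R : Type) (n kappa : nat) := 'I_n -> profile n kappa -> R.

Definition perm_profile n kappa (s : 'S_n) (x : profile n kappa) : profile n kappa :=
  [ffun j => x (s^-1%g j)].

Definition sgn (R : pzRingType) n (s : 'S_n) : R := (-1) ^+ odd_perm s.

Definition skew_symmetric (R : pzRingType) n kappa (c : game R n kappa) : Prop :=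
  forall (s : 'S_n) (i : 'I_n) (x : profile n kappa),
    c i x = sgn R s * c (s i) (perm_profile s x).

(* Main.v *)
Require Import Defs.
From mathcomp Require Import all_boot all_order all_algebra all_fingroup.
From mathcomp Require Import all_reals.
From mathcomp Require Import lra.
Import GRing.Theory Num.Theory.
Local Open Scope ring_scope.

Theorem proposition4p1 (R : realType) (n kappa : nat) (c : game R n kappa) :
  (2 <= n)%N -> (1 <= kappa)%N -> (kappa.+1 < n)%N ->
  skew_symmetric c ->
  forall (x : profile n kappa) (i : 'I_n), c i x = 0.
Proof.
move=> h2 h1 hn Hs x i.
case: (boolP [exists j, exists k, [&& j != k, j != i, k != i & x j == x k]]).
  move=> /existsP [j /existsP [k /and4P [jk ji ki /eqP e]]].
  have := Hs (tperm j k) i x.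
  have -> : tperm j k i = i by rewrite tpermD // eq_sym.
  have -> : perm_profile (tperm j k) x = x.
    apply/ffunP => l; rewrite /perm_profile ffunE tpermV.
    by case: tpermP => // ->.
  rewrite /sgn odd_tperm jk /= => E.
  have : c i x = - c i x by rewrite {1}E mulN1r.
  move=> E2; lra.
move/existsPn => H.
have inj : {in [set~ i] &, injective x}.
  move=> j k; rewrite !in_setC1 => hj hk e.
  apply/eqP; apply/negP => /negP jk.
  by move/existsPn: (H j) => /(_ k); rewrite jk hj hk e eqxx.
have := card_in_imset inj; rewrite cardsC1 card_ord => e.
have := max_card (x @: [set~ i]); rewrite e card_ord => le.
exfalso; move: le hn; clear; case: n => // n' /=; rewrite ltnS => a b.
by have := leq_ltn_trans a b; rewrite ltnn.
Qed.
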